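(* Let $\mathcal{G}=(\mathcal{V},\mathcal{E})$ be an observed undirected heterogeneous network with $K$ node types, and fix constants $\alpha\in(0,1)$, $\xi\in[0,1]$ and $\phi\in[0,1)$. Let $\mathcal{B}_0\subseteq\mathcal{V}$ be a seed set and let $(\mathcal{B}_i)_{i\ge 0}$ be the sequence of sets produced by the ECoHeN extraction procedure (described in the context) with parameters $\alpha,\xi,\phi$ started at $\mathcal{B}_0$. If there exists $j$ such that $|\mathcal{B}_i|<|\mathcal{V}|/2$ for all $i\ge j$, then the extraction procedure does not cycle.
   Context: Heterogeneous network: an undirected graph (multigraph allowed) in which each node $u$ has exactly one type in $\{1,\dots,K\}$; $V^{[k]}$ is the set of type-$k$ nodes, $E^{[kl]}$ the multiset of edges joining a type-$k$ and a type-$l$ node, and $d^{[k]}(u)$ (the type-$k$ degree of $u$) the number of edge endpoints at $u$ whose other endpoint is of type $k$. For $\mathcal{B}\subseteq\mathcal{V}$ let $B^{[k]}=\mathcal{B}\cap V^{[k]}$ and let $x^{[k]}(u:\mathcal{B})$ be the observed number of type-$k$ nodes in $\mathcal{B}$ adjacent to $u$ (with multiplicity). Significance of connection: for a node $u$ of type $l$ and $\mathcal{B}\subseteq\mathcal{V}$, set $$p_l^{[k]}(u,\mathcal{B})=\frac{\big[\sum_{w\in B^{[k]}}d^{[l]}(w)\big]-\mathbb{I}(k=l)\mathbb{I}(u\in\mathcal{B})\,d^{[k]}(u)}{2^{\mathbb{I}(k=l)}|E^{[kl]}|-\mathbb{I}(k=l)\,d^{[k]}(u)},$$ let $Y_l^{[k]}(u,\mathcal{B})\sim\mathrm{Binom}(d^{[k]}(u),p_l^{[k]}(u,\mathcal{B}))$,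 and define $\hat p_{\mathcal{B}}(u)=\prod_{k=1}^K\mathbb{P}\big(Y_l^{[k]}(u,\mathcal{B})\ge x^{[k]}(u:\mathcal{B})\big)$. (Its value is the same whether or not $u\in\mathcal{B}$.) Extraction procedure: the maximal allowance at iteration $i\ge 1$ is $\mu_i=\max(1,\lfloor\xi\phi^{i-1}|\mathcal{V}|\rfloor)$. Given $\mathcal{B}_{i-1}$ (iterations indexed so the $i$th update uses $\mu_i$), (1) compute $\hat p_{\mathcal{B}_{i-1}}(u)$ for every external node $u\notin\mathcal{B}_{i-1}$, convert these $|\mathcal{V}\setminus\mathcal{B}_{i-1}|$ values to Benjamini–Hochberg (FDR) adjusted $p$-values, and add to $\mathcal{B}_{i-1}$ those external nodes with adjusted $p$-value $\le\alpha$, at most $\mu_i$ of them (those with the smallest adjusted $p$-values), giving $\mathcal{B}_{i-1}^+$; (2) compute $\hat p_{\mathcal{B}_{i-1}^+}(u)$ for every $u\in\mathcal{B}_{i-1}^+$, convert these $|\mathcal{B}_{i-1}^+|$ values to Benjamini–Hochberg adjusted $p$-values, and remove those nodes with adjusted $p$-value $>\alpha$, at most $\mu_i$ of them (those with the largest adjusted $p$-values), giving $\mathcal{B}_i$. The procedure stops when no node is added or removed, i.e. $\mathcal{B}_{i-1}=\mathcal{B}_{i-1}^+=\mathcal{B}_i$. Benjamini–Hochberg adjusted $p$-values of $m$ values $p_{(1)}\le\dots\le p_{(m)}$ are $\tilde p_{(r)}=\min_{s\ge r}\min(1,m\,p_{(s)}/s)$. Cycling: the procedure cycles if it alternates indefinitely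 between two distinct sets of nodes, i.e. there exist $i_0$ and sets $S\ne T$ such that $\{\mathcal{B}_i,\mathcal{B}_{i+1}\}=\{S,T\}$ for all $i\ge i_0$. *)

(* Defs.v *)
From HB Require Import structures.
From mathcomp Require Import all_boot all_order all_algebra.
From mathcomp Require Import reals.
Set Implicit Arguments. Unset Strict Implicit. Unset Printing Implicit Defensive.
Import Order.TTheory GRing.Theory Num.Theory.
Local Open Scope ring_scope.

Section ECoHeN.
Variables (R : realType) (V : finType) (K : nat) (typ : V -> 'I_K).
(* The multiset of (undirected) edges; each edge (a, b) joins a and b. *)
Variable E : seq (V * V).

Definition tdeg (k : 'I_K) (u : V) : nat :=
  count (fun e : V * V => ((e.1 == u) && (typ e.2 == k)) || ((e.2 == u) && (typ e.1 == k))) E.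

Definition xobs (k : 'I_K) (u : V) (B : {set V}) : nat :=
  count (fun e : V * V =>
    [&& e.1 == u, e.2 \in B & typ e.2 == k] || [&& e.2 == u, e.1 \in B & typ e.1 == k]) E.

Definition Ecard (k l : 'I_K) : nat :=
  count (fun e : V * V => ((typ e.1 == k) && (typ e.2 == l)) || ((typ e.1 == l) && (typ e.2 == k))) E.

Definition pconn (k : 'I_K) (u : V) (B : {set V}) : R :=
  let l := typ u in
  let ind := (k == l)%:R : R in
  (((\sum_(w in B | typ w == k) tdeg l w)%:R - ind * (u \in B)%:R * (tdeg k u)%:R) /
   ((2 ^ (k == l) * Ecard k l)%:R - ind * (tdeg k u)%:R)).

Definition binom_tail (n : nat) (p : R) (x : nat) : R :=
  \sum_(x <= i < n.+1) ('C(n, i))%:R * p ^+ i * (1 - p) ^+ (n - i).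

Definition phat (B : {set V}) (u : V) : R :=
  \prod_(k < K) binom_tail (tdeg k u) (pconn k u B) (xobs k u B).

(* Benjamini--Hochberg adjusted p-value of u among the values f v, v in S:
   sort S by increasing f (p_(1) <= ... <= p_(m)); if u has rank r then
   \tilde p_(r) = min_{s >= r} min(1, m p_(s) / s). *)
Definition bh (S : {set V}) (f : V -> R) (u : V) : R :=
  let s := sort (fun a b => f a <= f b) (enum S) in
  let m := #|S| in
  \big[Num.min/1]_(index u s <= j < m)
     Num.min 1 (m%:R * f (nth u s j) / (j.+1)%:R).

Definition mu (xi phi : R) (i : nat) : nat :=
  maxn 1 `|Num.floor (xi * phi ^+ i.-1 * (#|V|)%:R)|%N.

Definition add_step (alpha : R) (m : nat) (B : {set V}) : {set V} :=
  let X := ~: B in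
  let adj := bh X (phat B) in
  let s := sort (fun a b => adj a <= adj b) (enum X) in
  let chosen := take m [seq u <- s | adj u <= alpha] in
  B :|: [set u in chosen].

Definition rem_step (alpha : R) (m : nat) (Bp : {set V}) : {set V} :=
  let adj := bh Bp (phat Bp) in
  let s := sort (fun a b => adj b <= adj a) (enum Bp) in
  let chosen := take m [seq u <- s | alpha < adj u] in
  Bp :\: [set u in chosen].

Definition ecohen_update (alpha xi phi : R) (i : nat) (B : {set V}) : {set V} :=
  rem_step alpha (mu xi phi i) (add_step alpha (mu xi phi i) B).

Fixpoint ecohen_seq (alpha xi phi : R) (B0 : {set V}) (i : nat) : {set V} :=
  if i is i'.+1 then ecohen_update alpha xi phi i (ecohen_seq alpha xi phi B0 i')
  else B0.

End ECoHeN.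

Definition cycles (V : finType) (B : nat -> {set V}) : Prop :=
  exists i0 (S T : {set V}), S != T /\
    forall i, (i0 <= i)%N ->
      (B i = S /\ B i.+1 = T) \/ (B i = T /\ B i.+1 = S).

(* Main.v *)
Require Import Defs.
From HB Require Import structures.
From mathcomp Require Import all_boot all_order all_algebra.
From mathcomp Require Import reals.
From mathcomp Require Import lra.
Import Order.TTheory GRing.Theory Num.Theory.
Local Open Scope ring_scope.

Lemma take_le1_mem (T : eqType) (m : nat) (s : seq T) x y :
  (m <= 1)%N -> x \in take m s -> y \in take m s -> x = y.
Proof.
move=> hm; have : (size (take m s) <= 1)%N by rewrite size_take_min (leq_trans (geq_minl _ _) hm).
case: (take m s) => [|z [|w t]] //= _; rewrite !inE => /eqP -> /eqP -> //.
Qed.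

Lemma add_sub (R : realType) (V : finType) (K : nat) (typ : V -> 'I_K) E (a : R) m (B : {set V}) :
  B \subset add_step typ E a m B.
Proof. by rewrite /add_step subsetUl. Qed.

Lemma add_1 (R : realType) (V : finType) (K : nat) (typ : V -> 'I_K) E (a : R) m (B : {set V}) x y :
  (m <= 1)%N -> x \in add_step typ E a m B -> x \notin B ->
  y \in add_step typ E a m B -> y \notin B -> x = y.
Proof.
move=> hm; rewrite /add_step !inE.
case/orP=> [-> //|hx] _; case/orP=> [-> //|hy] _.
exact: take_le1_mem hx hy.
Qed.

Lemma rem_sub (R : realType) (V : finType) (K : nat) (typ : V -> 'I_K) E (a : R) m (B : {set V}) :
  rem_step typ E a m B \subset B.
Proof. by rewrite /rem_step subsetDl. Qed.

Lemma rem_1 (R : realType) (V : finType) (K : nat) (typ : V -> 'I_K) E (a : R) m (B : {set V}) x y :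
  (m <= 1)%N -> x \in B -> x \notin rem_step typ E a m B ->
  y \in B -> y \notin rem_step typ E a m B -> x = y.
Proof.
move=> hm; rewrite /rem_step !inE => -> ; rewrite andbT negbK => hx ->.
rewrite andbT negbK => hy; exact: take_le1_mem hx hy.
Qed.

Lemma key (V : finType) (S T A1 A2 : {set V}) :
  S \subset A1 -> T \subset A1 -> S \subset A2 -> T \subset A2 ->
  (forall x y, x \in A1 -> x \notin S -> y \in A1 -> y \notin S -> x = y) ->
  (forall x y, x \in A1 -> x \notin T -> y \in A1 -> y \notin T -> x = y) ->
  (forall x y, x \in A2 -> x \notin S -> y \in A2 -> y \notin S -> x = y) ->
  (forall x y, x \in A2 -> x \notin T -> y \in A2 -> y \notin T -> x = y) ->
  S != T -> A1 = A2.
Proof.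
move=> s1 t1 s2 t2 h1S h1T h2S h2T neST.
suff gen : forall A : {set V}, S \subset A -> T \subset A ->
  (forall x y, x \in A -> x \notin S -> y \in A -> y \notin S -> x = y) ->
  (forall x y, x \in A -> x \notin T -> y \in A -> y \notin T -> x = y) ->
  A = S :|: T by rewrite (gen A1 s1 t1 h1S h1T) (gen A2 s2 t2 h2S h2T).
move=> A sA tA hS hT; apply/setP => x; rewrite inE.
case xS: (x \in S); first by rewrite (subsetP sA).
case xT: (x \in T); first by rewrite (subsetP tA).
case xA: (x \in A) => //.
have TS : T \subset S.
  apply/subsetP => y yT; apply/negPn/negP => yS.
  have := hS x y xA (negbT xS) (subsetP tA y yT) yS.
  by move=> exy; move: xT; rewrite exy yT.
have ST : S \subset T.
  apply/subsetP => y yS; apply/negPn/negP => yT.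
  have := hT x y xA (negbT xT) (subsetP sA y yS) yT.
  by move=> exy; move: xS; rewrite exy yS.
by move: neST; rewrite eqEsubset ST TS.
Qed.
Lemma bern (R : realType) (d : R) n : 0 <= d -> 1 + n%:R * d <= (1 + d) ^+ n.
Proof.
move=> d0; elim: n => [|n IH]; first by rewrite mul0r addr0 expr0.
rewrite exprS -natr1.
have h : 0 <= n%:R * d by rewrite mulr_ge0.
nra.
Qed.

Lemma pow_small (R : realType) (phi c : R) : 0 <= phi < 1 -> 0 <= c ->
  exists N, forall n, (N <= n)%N -> phi ^+ n * c < 1.
Proof.
case/andP=> p0 p1 c0.
have [->|pn0] := eqVneq phi 0.
  by exists 1%N => -[|n] // _; rewrite expr0n /= mul0r ltr01.
have pp : 0 < phi by rewrite lt_def pn0 p0.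
set d := phi^-1 - 1.
have dp : 0 < d by rewrite /d subr_gt0 invf_gt1.
exists (Num.Def.archi_bound (c / d)) => n hn.
have hb := archi_boundP (divr_ge0 c0 (ltW dp)).
have : (Num.Def.archi_bound (c / d))%:R <= n%:R :> R by rewrite ler_nat.
move=> hN.
have hcd : c < n%:R * d by rewrite -ltr_pdivrMr //; apply: lt_le_trans hb hN.
have hq := @bern R d n (ltW dp).
have e : phi = (1 + d)^-1 by rewrite /d addrC subrK invrK.
have qp : 0 < (1 + d) ^+ n by rewrite exprn_gt0 // ltr_wpDr // ltW.
rewrite e exprVn mulrC -ltr_pdivlMr ?invr_gt0 // invrK mul1r.
lra.
Qed.

Lemma mu_ev (R : realType) (V : finType) (xi phi : R) :
  0 <= xi <= 1 -> 0 <= phi < 1 -> exists N, forall i, (N <= i)%N -> mu V xi phi i = 1%N.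
Proof.
move=> /andP[x0 x1] hp; have /andP[p0 _] := hp.
have [N HN] := @pow_small R phi (#|V|)%:R hp (ler0n R #|V|).
exists N.+1 => i hi; rewrite /mu.
have hi' : (N <= i.-1)%N by case: i hi.
have := HN _ hi'.
set y := phi ^+ i.-1 * _ => hy.
have y0 : 0 <= y by rewrite mulr_ge0 // exprn_ge0.
have hx : 0 <= xi * phi ^+ i.-1 * (#|V|)%:R < 1.
  rewrite -mulrA mulr_ge0 //=; apply: le_lt_trans hy.
  by rewrite -/y ler_piMl.
case/andP: hx => hx0 hx1.
have -> : Num.floor (xi * phi ^+ i.-1 * (#|V|)%:R) = 0.
  by apply/eqP; rewrite eq_le floor_le0 hx1 floor_ge0 hx0.
by [].
Qed.

Lemma no2cycle (R : realType) (V : finType) (K : nat) (typ : V -> 'I_K) E (a : R) m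
  (X Y : {set V}) : (m <= 1)%N -> X != Y ->
  rem_step typ E a m (add_step typ E a m X) = Y ->
  rem_step typ E a m (add_step typ E a m Y) = X -> False.
Proof.
move=> hm neXY eY eX.
have e : add_step typ E a m X = add_step typ E a m Y.
  apply: (@key V X Y (add_step typ E a m X) (add_step typ E a m Y)).
  - exact: (add_sub _ _ _ typ E a m X).
  - by rewrite -{1}eY; apply: (rem_sub _ _ _ typ E a m).
  - by rewrite -{1}eX; apply: (rem_sub _ _ _ typ E a m).
  - exact: (add_sub _ _ _ typ E a m Y).
  - by move=> x y; apply: (add_1 _ _ _ typ E a m X x y hm).
  - by rewrite -{1 2}eY => x y; apply: (rem_1 _ _ _ typ E a m _ x y hm).
  - by rewrite -{1 2}eX => x y; apply: (rem_1 _ _ _ typ E a m _ x y hm).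
  - by move=> x y; apply: (add_1 _ _ _ typ E a m Y x y hm).
  - exact: neXY.
by move: neXY; rewrite -{1}eY e eX eqxx.
Qed.
Theorem theorem3p2 (R : realType) (V : finType) (K : nat) (typ : V -> 'I_K)
    (E : seq (V * V)) (hE : all (fun e : V * V => e.1 != e.2) E)
    (alpha xi phi : R)
    (halpha : 0 < alpha < 1) (hxi : 0 <= xi <= 1) (hphi : 0 <= phi < 1)
    (B0 : {set V}) :
  (exists j : nat, forall i : nat, (j <= i)%N ->
      (#|ecohen_seq typ E alpha xi phi B0 i|)%:R < (#|V|)%:R / 2 :> R) ->
  ~ cycles (ecohen_seq typ E alpha xi phi B0).
Proof.
move=> _ [i0 [S [T [neST H]]]].
have [N HN] := mu_ev R V xi phi hxi hphi.
set i := maxn i0 N.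
have hi0 : (i0 <= i)%N by rewrite leq_maxl.
have hN : (N <= i)%N by rewrite leq_maxr.
have m1 : mu V xi phi i.+1 = 1%N by apply: HN; exact: leq_trans hN (leqnSn i).
have m2 : mu V xi phi i.+2 = 1%N by apply: HN; exact: leq_trans hN (leq_trans (leqnSn i) (leqnSn i.+1)).
set B := ecohen_seq typ E alpha xi phi B0.
have step : forall X Y, X != Y -> B i = X -> B i.+1 = Y -> B i.+2 = X -> False.
  move=> X Y nXY e0 e1 e2.
  apply: (@no2cycle R V K typ E alpha 1%N X Y (leqnn 1) nXY).
  - by rewrite -e1 -e0 /B /= /ecohen_update m1.
  - by rewrite -e2 -e1 /B /= /ecohen_update m2.
have H1 := H i.+1 (leq_trans hi0 (leqnSn i)).
case: (H i hi0) => [[e0 e1]|[e0 e1]].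
- case: H1 => [[e1' _]|[_ e2]].
    by move: neST; rewrite -e1 -e1' eqxx.
  exact: step neST e0 e1 e2.
- case: H1 => [[_ e2]|[e1' _]].
    by apply: (step T S) => //; rewrite eq_sym.
  by move: neST; rewrite -e1 -e1' eqxx.
Qed.
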